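(* Let $(G,E)$ be a finitely generated and contracting self-similar groupoid action on a finite directed graph $E$, and let $q:E^{-\infty}\to\mathcal{J}_{G,E}$ be the quotient map. Then for $\mu,\nu\in E^{-\infty}$, $q(\mu)$ and $q(\nu)$ lie in the same connected component of $\mathcal{J}_{G,E}$ if and only if $\mu\sim_e\nu$. That is, the connected component space $\mathcal{C}(\mathcal{J}_{G,E})$ equals $E^{-\infty}/\sim_e$.
   Context: Directed graph $E=(E^0,E^1,r,s)$; finite paths $\mu_1\cdots\mu_n$ with $s(\mu_i)=r(\mu_{i+1})$; $E^*$ finite paths, $vE^*$ those with range $v$; $E^{-\infty}$ left-infinite paths $\cdots\mu_{-2}\mu_{-1}$ with product topology. A self-similar groupoid action $(G,E)$: $G$ is a groupoid with unit space $E^0$, domain $d$, codomain $c$, acting faithfully so that each $g$ is a length-preserving bijection $d(g)E^*\to c(g)E^*$ with restrictions $g|_\mu\in G$, $d(g|_\mu)=s(\mu)$, satisfying $g\cdot(\mu\nu)=(g\cdot\mu)(g|_\mu\cdot\nu)$. Finitely generated: $G$ is generated as a groupoid by a finite set. Contracting: there is a finite $F\subseteq G$ such that for every $g$ there is $n$ with $g|_\mu\in F$ for all $\mu\in d(g)E^k$, $k\ge n$. Asymptotic equivalence: $\mu\sim_{ae}\nu$ iff there are a finite $F\subseteq G$ and $(g_n)_{n<0}\subseteq F$ with $d(g_n)=r(\mu_n)$ and $g_n\cdot\mu_n\cdots\mu_{-1}=\nu_n\cdots\nu_{-1}$ for all $n<0$; the limit space is $\mathcal{J}_{G,E}=E^{-\infty}/\sim_{ae}$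 with the quotient topology. The relation $\sim_e$: $\mu\sim_e\nu$ iff there is a sequence $(g_n)_{n<0}\subseteq G$ (not required to lie in a finite set) with $d(g_n)=r(\mu_n)$ and $g_n\cdot\mu_n\cdots\mu_{-1}=\nu_n\cdots\nu_{-1}$ for all $n<0$. The connected component space $\mathcal{C}(X)$ of a space $X$ is its quotient by the relation of lying in the same connected component. *)

(* Defs.v *)
From HB Require Import structures.
From mathcomp Require Import all_boot all_order all_algebra.
From mathcomp Require Import all_classical all_reals.
From mathcomp Require Import topology_structure connected product_topology
  function_spaces subtype_topology discrete_topology quotient_topology.

Set Implicit Arguments.
Unset Strict Implicit.
Unset Printing Implicit Defensive.

Local Open Scope classical_set_scope.

Record graph := Graph {
  vert : finType;
  edge : finType;
  rg : edge -> vert;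
  sr : edge -> vert
}.

Definition fpath_ok (E : graph) (p : seq (edge E)) : bool :=
  sorted (fun e f => sr e == rg f) p.

(* p \in vE^* : a finite path with range v; the empty sequence stands
   for the vertex v itself (the path of length 0 at v). *)
Definition vpath (E : graph) (v : vert E) (p : seq (edge E)) : bool :=
  fpath_ok p && (if p is e :: _ then rg e == v else true).

Record ssga (E : graph) := SSGA {
  grp : Type;
  dom : grp -> vert E;
  cod : grp -> vert E;
  gmul : grp -> grp -> grp;
  ginv : grp -> grp;
  gunit : vert E -> grp;
  act : grp -> seq (edge E) -> seq (edge E);
  res : grp -> edge E -> grp;
  gunit_dom : forall v, dom (gunit v) = v;
  gunit_cod : forall v, cod (gunit v) = v;
  gmul_dom : forall g h, dom g = cod h -> dom (gmul g h) = dom h;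
  gmul_cod : forall g h, dom g = cod h -> cod (gmul g h) = cod g;
  gmulA : forall g h k, dom g = cod h -> dom h = cod k ->
    gmul (gmul g h) k = gmul g (gmul h k);
  gmul1g : forall g, gmul (gunit (cod g)) g = g;
  gmulg1 : forall g, gmul g (gunit (dom g)) = g;
  ginv_dom : forall g, dom (ginv g) = cod g;
  ginv_cod : forall g, cod (ginv g) = dom g;
  gmulVg : forall g, gmul (ginv g) g = gunit (dom g);
  gmulgV : forall g, gmul g (ginv g) = gunit (cod g);
  (* action: length preserving maps d(g)E^* -> c(g)E^*, forming a
     groupoid homomorphism (hence bijections) *)
  act_vpath : forall g p, vpath (dom g) p -> vpath (cod g) (act g p);
  act_size : forall g p, vpath (dom g) p -> size (act g p) = size p;
  act_unit : forall v p, vpath v p -> act (gunit v) p = p;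
  act_mul : forall g h p, dom g = cod h -> vpath (dom h) p ->
    act (gmul g h) p = act g (act h p);
  act_faithful : forall g h, dom g = dom h -> cod g = cod h ->
    (forall p, vpath (dom g) p -> act g p = act h p) -> g = h;
  res_dom : forall g e, rg e = dom g -> dom (res g e) = sr e;
  res_cod : forall g e, rg e = dom g ->
    cod (res g e) = sr (head e (act g [:: e]));
  act_cons : forall g e p, rg e = dom g -> vpath (sr e) p ->
    act g (e :: p) = act g [:: e] ++ act (res g e) p
}.


Definition resp (E : graph) (A : ssga E) (g : grp A) (p : seq (edge E)) :
  grp A := foldl (@res _ A) g p.

Inductive generated (E : graph) (A : ssga E) (F : set (grp A)) :
  grp A -> Prop :=
| gen_base g : F g -> generated F g
| gen_unit v : generated F (@gunit _ A v)
| gen_inv g : generated F g -> generated F (@ginv _ A g)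
| gen_mul g h : @dom _ A g = @cod _ A h -> generated F g -> generated F h ->
    generated F (@gmul _ A g h).

Definition finitely_generated (E : graph) (A : ssga E) : Prop :=
  exists F : set (grp A), finite_set F /\ forall g, generated F g.

Definition contracting (E : graph) (A : ssga E) : Prop :=
  exists F : set (grp A), finite_set F /\
    forall g, exists n, forall k, (n <= k)%N ->
      forall p, vpath (@dom _ A g) p -> size p = k -> F (resp g p).

(* Left-infinite paths ... mu_(-2) mu_(-1).  We encode mu by
   x : nat -> E^1 with x k = mu_(-(k+1)); the condition
   s(mu_i) = r(mu_(i+1)) reads s(x (k+1)) = r(x k).                    *)
Definition edge_space (E : graph) : topologicalType :=
  {ptws nat -> discrete_topology (edge E)}.

Definition linf_ok (E : graph) : set (edge_space E) :=
  fun x => forall k, sr (x k.+1) = rg (x k).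

Definition linf (E : graph) : topologicalType := set_type (@linf_ok E).

Definition lval (E : graph) (mu : linf E) : nat -> edge E :=
  set_val (mu : set_type (@linf_ok E)).

(* seg mu n = mu_(-n) ... mu_(-1) (a finite path of length n) *)
Definition seg (E : graph) (mu : linf E) (n : nat) : seq (edge E) :=
  rev (mkseq (lval mu) n).

(* asymptotic equivalence: g_k plays the role of g_(-(k+1)) *)
Definition sim_ae (E : graph) (A : ssga E) (mu nu : linf E) : Prop :=
  exists F : set (grp A), finite_set F /\
  exists gs : nat -> grp A, forall k,
    [/\ F (gs k), @dom _ A (gs k) = rg (lval mu k) &
        @act _ A (gs k) (seg mu k.+1) = seg nu k.+1].

Definition sim_e (E : graph) (A : ssga E) (mu nu : linf E) : Prop :=
  exists gs : nat -> grp A, forall k,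
    @dom _ A (gs k) = rg (lval mu k) /\
    @act _ A (gs k) (seg mu k.+1) = seg nu k.+1.

Definition aeclass (E : graph) (A : ssga E) :=
  {C : set (linf E) | exists x, C = sim_ae A x}.

Definition ae_pi (E : graph) (A : ssga E) (x : linf E) : aeclass A :=
  exist _ (sim_ae A x) (ex_intro _ x erefl).

Definition ae_repr (E : graph) (A : ssga E) (C : aeclass A) : linf E :=
  projT1 (cid (proj2_sig C)).

Lemma ae_reprK (E : graph) (A : ssga E) :
  cancel (@ae_repr E A) (@ae_pi E A).
Proof.
move=> [C HC]; rewrite /ae_pi /ae_repr /=.
case: (cid HC) => x /= Hx; subst C.
by congr exist; exact: Prop_irrelevance.
Qed.

HB.instance Definition _ (E : graph) (A : ssga E) :=
  isQuotient.Build (linf E) (aeclass A) (@ae_reprK E A).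

Definition limit_space (E : graph) (A : ssga E) : topologicalType :=
  quotient_topology (aeclass A).

Definition qmap (E : graph) (A : ssga E) (x : linf E) : limit_space A :=
  (\pi_(aeclass A) x)%qT.

(* Main.v *)
Require Import Defs.
From HB Require Import structures.
From mathcomp Require Import all_boot all_order all_algebra.
From mathcomp Require Import all_classical all_reals.
From mathcomp Require Import topology_structure connected product_topology
  function_spaces subtype_topology discrete_topology quotient_topology.
From mathcomp Require Import nat_topology.
From mathcomp Require Import zify.

Set Implicit Arguments.
Unset Strict Implicit.
Unset Printing Implicit Defensive.
Local Open Scope classical_set_scope.

Section Alg.
Variables (E : graph) (A : ssga E).
Local Notation G := (grp A).
Local Notation dm := (@dom _ A).
Local Notation cd := (@cod _ A).
Local Notation ac := (@act _ A).
Implicit Types (v : vert E) (e : edge E) (p u w : seq (edge E)) (g h : grp A).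

Definition endv (v : vert E) (u : seq (edge E)) := foldl (fun _ e => sr e) v u.

Lemma vpath_nil v : vpath v [::].
Proof. by []. Qed.

Lemma vpath_cons v e p : vpath v (e :: p) = (rg e == v) && vpath (sr e) p.
Proof.
rewrite /vpath /fpath_ok /=; case: p => [|f p] /=; first by rewrite ?andbT.
rewrite [sr e == _]eq_sym.
by case: (rg e == v); case: (rg f == sr e); case: (path _ _ _).
Qed.

Lemma vpath_cat v u w : vpath v (u ++ w) = vpath v u && vpath (endv v u) w.
Proof.
elim: u v => [|e u IH] v /=; first by [].
by rewrite !vpath_cons IH andbA.
Qed.

Lemma act_nil g : ac g [::] = [::].
Proof. by apply/size0nil; rewrite act_size. Qed.

Lemma act_cat g u w : vpath (dm g) (u ++ w) ->
  [/\ ac g (u ++ w) = ac g u ++ ac (resp g u) w,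
      dm (resp g u) = endv (dm g) u & vpath (dm (resp g u)) w].
Proof.
elim: u g => [|e u IH] g /=.
  by rewrite act_nil.
rewrite vpath_cons => /andP[/eqP he hp].
have hd : dm (res g e) = sr e by rewrite res_dom.
have hp' : vpath (dm (res g e)) (u ++ w) by rewrite hd.
have [h1 h2 h3] := IH _ hp'.
have hu : vpath (sr e) u by move: hp; rewrite vpath_cat => /andP[].
split.
- rewrite (act_cons he hp) (act_cons he hu).
  by rewrite h1 catA.
- by rewrite h2 hd /endv /= .
- exact: h3.
Qed.

Lemma act_suffix g u w : vpath (dm g) (u ++ w) ->
  drop (size u) (ac g (u ++ w)) = ac (resp g u) w /\ dm (resp g u) = endv (dm g) u
  /\ vpath (dm (resp g u)) w.
Proof.
move=> hp; have [h1 h2 h3] := act_cat hp.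
rewrite h1 drop_size_cat //; rewrite act_size //.
by move: hp; rewrite vpath_cat => /andP[].
Qed.

Lemma act_inv g p : vpath (dm g) p -> ac (ginv g) (ac g p) = p.
Proof.
move=> hp; rewrite -act_mul ?ginv_dom // gmulVg act_unit //.
Qed.

Lemma act_invV g p : vpath (cd g) p -> ac g (ac (ginv g) p) = p.
Proof.
move=> hp; rewrite -act_mul ?ginv_cod ?ginv_dom // gmulgV act_unit //.
Qed.

Lemma vpath_head v v' e p : vpath v (e :: p) -> vpath v' (e :: p) -> v = v'.
Proof. by rewrite !vpath_cons => /andP[/eqP <- _] /andP[/eqP <- _]. Qed.

End Alg.

Section Seg.
Variables (E : graph).
Implicit Types (v : vert E) (e : edge E) (p u w : seq (edge E)) (mu nu z : linf E).

Lemma lvalP mu k : sr (lval mu k.+1) = rg (lval mu k).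
Proof. by have := set_valP mu; rewrite /lval set_valE; apply. Qed.

Lemma seg0 mu : seg mu 0 = [::].
Proof. by []. Qed.

Lemma segS mu n : seg mu n.+1 = lval mu n :: seg mu n.
Proof. by rewrite /seg mkseqS rev_rcons. Qed.

Lemma size_seg mu n : size (seg mu n) = n.
Proof. by rewrite /seg size_rev size_mkseq. Qed.

Lemma vpath_seg mu n : vpath (rg (lval mu n)) (seg mu n.+1).
Proof.
elim: n => [|n IH]; first by rewrite segS seg0 vpath_cons eqxx.
by rewrite segS vpath_cons eqxx /= lvalP.
Qed.

Lemma seg_split mu m d : exists u, seg mu (d + m) = u ++ seg mu m /\ size u = d.
Proof.
elim: d => [|d [u [hu su]]]; first by exists [::].
by exists (lval mu (d + m) :: u); rewrite addSn segS hu /= su.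
Qed.

Lemma seg_eqP z z' n : seg z n = seg z' n <-> forall t, (t < n)%N -> lval z t = lval z' t.
Proof.
elim: n => [|n IH]; first by split => // _ t.
rewrite !segS; split.
  case=> h1 /IH h2 t; rewrite ltnS leq_eqVlt => /orP[/eqP -> //|]; exact: h2.
move=> h; congr cons; first exact: h.
by apply/IH => t lt; apply: h; apply: ltnW.
Qed.

Lemma seg_head mu n : exists s, seg mu n.+1 = lval mu n :: s.
Proof. by rewrite segS; eexists. Qed.

End Seg.

Section Orb.
Variables (E : graph) (A : ssga E).
Local Notation G := (grp A).
Local Notation dm := (@dom _ A).
Local Notation cd := (@cod _ A).
Local Notation ac := (@act _ A).
Implicit Types (v : vert E) (e : edge E) (p u w : seq (edge E)) (mu nu z : linf E)
  (g h : grp A).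

Definition Orb mu n w := exists g, dm g = rg (lval mu n) /\ ac g (seg mu n.+1) = w.

Lemma Orb_refl mu n : Orb mu n (seg mu n.+1).
Proof.
exists (gunit A (rg (lval mu n))); rewrite gunit_dom; split => //.
by rewrite act_unit // vpath_seg.
Qed.

Lemma Orb_vpath mu n w : Orb mu n w -> exists g, vpath (cd g) w /\ size w = n.+1.
Proof.
move=> [g [hd <-]]; exists g; split; first by apply: act_vpath; rewrite hd vpath_seg.
by rewrite act_size ?size_seg // hd vpath_seg.
Qed.

Lemma Orb_act mu n w s : Orb mu n w -> vpath (dm s) w -> Orb mu n (ac s w).
Proof.
move=> [g [hd hw]] hs.
have hv : vpath (dm g) (seg mu n.+1) by rewrite hd vpath_seg.
have hc : vpath (cd g) w by rewrite -hw; apply: act_vpath.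
have e1 : dm s = cd g.
  have [s0 hs0] := seg_head mu n.
  move: hw hs hc; case: w => [|e w'].
    by move=> hw; have := act_size hv; rewrite hw size_seg.
  by move=> _; apply: vpath_head.
exists (gmul s g); split; first by rewrite gmul_dom.
by rewrite act_mul // hw.
Qed.

Lemma Orb_down mu n u w m : Orb mu n (u ++ w) -> size w = m.+1 -> (m <= n)%N ->
  Orb mu m w.
Proof.
move=> [g [hd hw]] sw mn.
have [u0 [hu0 su0]] := seg_split mu m.+1 (n - m).
have e1 : ((n - m) + m.+1 = n.+1)%N by rewrite addnS subnK.
rewrite e1 in hu0.
have hv : vpath (dm g) (u0 ++ seg mu m.+1) by rewrite -hu0 hd vpath_seg.
have [h1 [h2 h3]] := act_suffix hv.
exists (resp g u0); split.
  have [s0 hs0] := seg_head mu m.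
  by move: h3; rewrite hs0 vpath_cons => /andP[/eqP <- _].
rewrite -h1 -hu0 hw.
have su : size u = size u0.
  have := act_size hv; rewrite -hu0 hw size_cat size_seg sw su0 => /eqP.
  by rewrite -e1 eqn_add2r => /eqP.
by rewrite -su drop_size_cat.
Qed.

End Orb.

Section Ext.
Variable E : graph.

Lemma extend (w : seq (edge E)) m : fpath_ok w -> (m + #|vert E| < size w)%N ->
  exists p : linf E, seg p m = drop (size w - m) w.
Proof.
move=> hw hs.
have [e0 _] : exists e0 : edge E, True.
  by case: w hw hs => [|e w'] //; exists e.
set n := size w.
pose c i := nth e0 (rev w) i.
have hc : forall i, (i.+1 < n)%N -> sr (c i.+1) = rg (c i).
  move=> i hi; rewrite /c !nth_rev ?size_rev //; last exact: ltnW.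
  have := (sortedP e0 hw) (n - i.+2).
  have -> : (n - i.+1 = (n - i.+2).+1)%N by rewrite subnSK.
  move=> h; apply/eqP; apply: h.
  rewrite -/n; lia.
pose f (t : 'I_(#|vert E|.+1)) := rg (c (m + t)).
have [i [j [mi ij hj fij]]] : exists i j, [/\ (m <= i)%N, (i < j)%N, (j < n)%N & rg (c i) = rg (c j)].
  have : ~~ injectiveb f.
    apply/negP => /injectiveP hinj; have := leq_card _ hinj.
    by rewrite card_ord ltnn.
  move=> /injectivePn [t1 [t2 ne12 ft]].
  have := ne12; rewrite neq_ltn => /orP[lt|lt].
    exists (m + t1)%N, (m + t2)%N; split => //; first exact: leq_addr; first by rewrite ltn_add2l.
    by have := ltn_ord t2; rewrite -/n; lia.
  exists (m + t2)%N, (m + t1)%N; split => //; first exact: leq_addr; first by rewrite ltn_add2l.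
  by have := ltn_ord t1; rewrite -/n; lia.
pose idx := fix idx t := if t is t'.+1 then (if idx t' == j then i.+1 else (idx t').+1) else 0%N.
have idx_le t : (idx t <= j)%N.
  elim: t => [|t IH] /=; first by [].
  by case: eqP => [_|ne]; [|rewrite ltn_neqAle IH andbT; apply/eqP].
have idx_id t : (t <= j)%N -> idx t = t.
  elim: t => [|t IH] //= tj; rewrite IH ?(ltnW tj) //.
  by rewrite (ltn_eqF tj).
pose pf := (fun t => c (idx t)) : edge_space E.
have pok : linf_ok pf.
  move=> t; rewrite /pf /=; case: eqP => [->|ne].
    by rewrite hc -?fij //; apply: leq_ltn_trans hj.
  apply: hc; apply: leq_ltn_trans hj.
  by rewrite ltn_neqAle idx_le andbT; apply/eqP.
exists (exist _ pf (mem_set pok)).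
have hl : forall t, lval (exist _ pf (mem_set pok)) t = c (idx t) by [].
have hmn : (m < n)%N by rewrite -/n in hs; lia.
have hmj : (m <= j)%N by lia.
rewrite /seg.
have -> : mkseq (lval (exist _ pf (mem_set pok))) m = take m (rev w).
  apply: (@eq_from_nth _ e0); first by rewrite size_mkseq size_takel // size_rev ltnW.
  rewrite size_mkseq.
  move=> t tm; rewrite nth_mkseq // nth_take // hl idx_id //.
  by apply: leq_trans hmj; apply: ltnW.
by rewrite take_rev revK.
Qed.
End Ext.

Section Ae.
Variables (E : graph) (A : ssga E).
Local Notation G := (grp A).
Local Notation dm := (@dom _ A).
Local Notation cd := (@cod _ A).
Local Notation ac := (@act _ A).
Implicit Types (v : vert E) (e : edge E) (p u w : seq (edge E)) (mu nu z : linf E)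
  (g h : grp A).

Lemma cod_seg g mu nu k : dm g = rg (lval mu k) -> ac g (seg mu k.+1) = seg nu k.+1 ->
  cd g = rg (lval nu k).
Proof.
move=> hd ha.
have : vpath (cd g) (seg nu k.+1) by rewrite -ha; apply: act_vpath; rewrite hd vpath_seg.
by rewrite segS vpath_cons => /andP[/eqP <-].
Qed.

Lemma finite_vert : finite_set [set: vert E].
Proof.
apply/finite_seqP; exists (enum (vert E)).
by apply/seteqP; split => x //= _; rewrite mem_enum.
Qed.

Lemma sim_ae_refl mu : sim_ae A mu mu.
Proof.
exists [set gunit A v | v in [set: vert E]]; split.
  exact: finite_image finite_vert.
exists (fun k => gunit A (rg (lval mu k))) => k; split.
- by exists (rg (lval mu k)).
- by rewrite gunit_dom.
- by rewrite act_unit // vpath_seg.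
Qed.

Lemma sim_ae_sym mu nu : sim_ae A mu nu -> sim_ae A nu mu.
Proof.
move=> [F [fF [gs hgs]]].
exists [set ginv x | x in F]; split; first exact: finite_image.
exists (fun k => ginv (gs k)) => k; have [h1 h2 h3] := hgs k; split.
- by exists (gs k).
- by rewrite ginv_dom; apply: cod_seg h3.
- by rewrite -h3 act_inv // h2 vpath_seg.
Qed.

Lemma sim_ae_trans mu nu z : sim_ae A mu nu -> sim_ae A nu z -> sim_ae A mu z.
Proof.
move=> [F1 [fF1 [g1 h1]]] [F2 [fF2 [g2 h2]]].
exists [set gmul x.1 x.2 | x in F2 `*` F1]; split.
  by apply: finite_image; apply: finite_setX.
exists (fun k => gmul (g2 k) (g1 k)) => k.
have [a1 a2 a3] := h1 k; have [b1 b2 b3] := h2 k.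
have e1 : dm (g2 k) = cd (g1 k) by rewrite b2; apply/esym/(cod_seg a2 a3).
split.
- by exists (g2 k, g1 k).
- by rewrite gmul_dom.
- by rewrite act_mul // ?a3 // a2 vpath_seg.
Qed.

Lemma pi_eq z z' : sim_ae A z z' -> qmap A z = qmap A z'.
Proof.
move=> hz.
have e : sim_ae A z = sim_ae A z'.
  apply/funext => w; apply/propext; split.
    by apply: sim_ae_trans; apply: sim_ae_sym.
  exact: sim_ae_trans.
rewrite /qmap unlock; change (ae_pi A z = ae_pi A z').
rewrite /ae_pi; move: (ex_intro _ z _) (ex_intro _ z' _).
rewrite e => p1 p2; congr exist; exact: Prop_irrelevance.
Qed.

Lemma repr_ae z : sim_ae A z (ae_repr (qmap A z)) /\ sim_ae A (ae_repr (qmap A z)) z.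
Proof.
rewrite /qmap unlock; change (sim_ae A z (ae_repr (ae_pi A z)) /\ sim_ae A (ae_repr (ae_pi A z)) z).
rewrite /ae_repr /ae_pi /=.
case: cid => r /= hr; split.
  by rewrite hr; apply: sim_ae_refl.
by rewrite -hr; apply: sim_ae_refl.
Qed.

Lemma Orb_ae mu n a b : sim_ae A a b -> Orb A mu n (seg a n.+1) -> Orb A mu n (seg b n.+1).
Proof.
move=> [F [_ [gs hgs]]] ho; have [_ h2 h3] := hgs n.
by rewrite -h3; apply: Orb_act => //; rewrite h2 vpath_seg.
Qed.

End Ae.

Section Konig.
Variables (T : finType) (a : nat -> nat -> T).

Let x0 := a 0 0.
Let good (s : seq T) := forall k0, exists k, (k0 <= k)%N /\
  forall t, (t < size s)%N -> a k t = nth x0 s t.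

Let good_step s : good s -> exists x, good (rcons s x).
Proof.
move=> gs; apply: contrapT => hn.
have hb : forall x, exists k0, forall k, (k0 <= k)%N ->
    ~ (forall t, (t < size (rcons s x))%N -> a k t = nth x0 (rcons s x) t).
  move=> x; apply: contrapT => hx; apply: hn; exists x => k0.
  apply: contrapT => hk; apply: hx; exists k0 => k k0k hall; apply: hk.
  by exists k.
have [bnd hbnd] := choice hb.
have [k [hk hagree]] := gs (\max_(x : T) bnd x).
apply: (hbnd (a k (size s)) k).
  exact: leq_trans (leq_bigmax _) hk.
move=> t; rewrite size_rcons ltnS leq_eqVlt => /orP[/eqP ->|ts].
  by rewrite nth_rcons ltnn eqxx.
by rewrite nth_rcons ts; apply: hagree.
Qed.

Lemma konig : exists c : nat -> T, forall j k0, exists k, (k0 <= k)%N /\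
  forall t, (t < j)%N -> a k t = c t.
Proof.
have hn : forall s, exists x, good s -> good (rcons s x).
  move=> s; case: (pselect (good s)) => gs.
    by have [x hx] := good_step gs; exists x.
  by exists x0.
have [nxt hnxt] := choice hn.
pose pre := fix pre n := if n is m.+1 then rcons (pre m) (nxt (pre m)) else [::].
have spre n : size (pre n) = n by elim: n => //= n IH; rewrite size_rcons IH.
have gpre n : good (pre n).
  elim: n => [|n IH] /=; last exact: hnxt.
  by move=> k0; exists k0; split.
have npre n t : (t < n)%N -> nth x0 (pre n) t = nth x0 (pre t.+1) t.
  elim: n => // n IH; rewrite ltnS leq_eqVlt => /orP[/eqP ->//|tn].
  by rewrite /= nth_rcons spre tn IH.
exists (fun t => nth x0 (pre t.+1) t) => j k0.
have [k [hk ha]] := gpre j k0; exists k; split => // t tj.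
by rewrite ha ?spre // npre.
Qed.
End Konig.

Section Topo.
Variable E : graph.

Lemma cyl_open (f : edge_space E) j : open [set g : edge_space E | forall t, (t < j)%N -> g t = f t].
Proof.
elim: j => [|j IH].
  by rewrite (_ : [set g | _] = setT); [exact: openT | apply/seteqP; split].
rewrite (_ : [set g : edge_space E | _] = [set g : edge_space E | forall t, (t < j)%N -> g t = f t] `&` (proj j @^-1` [set f j])).
  apply: openI => //.
  have pc : continuous (fun g : edge_space E => (g j : discrete_topology (edge E))).
    exact: (@proj_continuous nat (fun _ => discrete_topology (edge E)) j).
  have := (continuousP _).1 pc.
  by apply; apply: discrete_open.
apply/seteqP; split => g /=.
  by move=> h; split; [move=> t tj; apply: h; apply: ltnW | apply: h].
by move=> [h1 h2] t; rewrite ltnS leq_eqVlt => /orP[/eqP -> //|]; apply: h1.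
Qed.

Lemma open_prefix (P : set (linf E)) j :
  (forall z w, P z -> (forall t, (t < j)%N -> lval w t = lval z t) -> P w) -> open P.
Proof.
move=> hP.
exists [set f : edge_space E | exists z, P z /\ forall t, (t < j)%N -> f t = lval z t].
  rewrite openE /= => f [z [Pz hf]]; rewrite /interior.
  apply: (@filterS _ _ _ [set g : edge_space E | forall t, (t < j)%N -> g t = f t]).
    by move=> g hg; exists z; split => // t tj; rewrite hg // hf.
  by apply: open_nbhs_nbhs; split; [apply: cyl_open|].
apply/seteqP; split => w /=.
  move=> [z [Pz hz]]; apply: (hP z) => // t tj; rewrite -hz //.
by move=> Pw; exists w; split.
Qed.

Lemma open_cyl (O : set (linf E)) z : open O -> O z ->
  exists j, forall w : linf E, (forall t, (t < j)%N -> lval w t = lval z t) -> O w.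
Proof.
move=> [W oW <-] Wz; apply: contrapT => hn.
have hw : forall j, exists w : linf E, (forall t, (t < j)%N -> lval w t = lval z t) /\ ~ W (set_val w).
  move=> j; apply: contrapT => hj; apply: hn; exists j => w hw.
  apply: contrapT => nw; apply: hj; by exists w.
have [w hwP] := choice hw.
have cv : (fun j => (set_val (w j) : edge_space E)) @ \oo --> (set_val z : edge_space E).
  apply/(@pointwise_cvgP nat _ _ (set_val z : edge_space E) _) => t.
  apply/discrete_cvg => /=.
  exists t.+1 => // j /= tj.
  by have := (hwP j).1 t tj; rewrite /lval set_valE.
have : nbhs (set_val z : edge_space E) W by apply: open_nbhs_nbhs.
move=> /cv [N _ hN].
by have := (hwP N).2; apply; apply: (hN N) => /=.
Qed.

Lemma closed_cyl (Cl : set (linf E)) z : closed Cl ->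
  (forall j, exists w, Cl w /\ forall t, (t < j)%N -> lval w t = lval z t) -> Cl z.
Proof.
move=> cC hz; apply: contrapT => nz.
have oC : open (~` Cl) by apply: closed_openC.
have [j hj] := open_cyl oC nz.
have [w [Cw hw]] := hz j.
exact: (hj w hw Cw).
Qed.

End Topo.

Section Forward.
Variables (E : graph) (A : ssga E).

Lemma forward mu nu : connected_component [set: limit_space A] (qmap A mu) (qmap A nu) ->
  sim_e A mu nu.
Proof.
move=> [C [Cmu _ cC] Cnu].
suff h : forall n, Orb A mu n (seg nu n.+1).
  by have [gs hgs] := choice h; exists gs.
move=> n; pose P z := Orb A mu n (seg z n.+1).
have Pinv z : P (ae_repr (qmap A z)) <-> P z.
  have [h1 h2] := repr_ae A z.
  by split; apply: Orb_ae.
have Pop : forall z w, P z -> (forall t, (t < n.+1)%N -> lval w t = lval z t) -> P w.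
  by move=> z w; rewrite /P => hz /seg_eqP ->.
have nPop : forall z w, ~ P z -> (forall t, (t < n.+1)%N -> lval w t = lval z t) -> ~ P w.
  by move=> z w; rewrite /P => hz /seg_eqP ->.
pose W : set (limit_space A) := [set c | P (ae_repr c)].
have oW : open W.
  rewrite /open /= /quotient_open; apply: (@open_prefix _ _ n.+1) => z w /= hz hzw.
  apply/(Pinv w); apply: Pop hzw; exact/(Pinv z).
have oWc : open (~` W).
  rewrite /open /= /quotient_open; apply: (@open_prefix _ _ n.+1) => z w /= hz hzw.
  move/(Pinv w); apply: nPop hzw; by move/(Pinv z).
have cW : closed W by rewrite -[W]setCK; apply: open_closedC.
have hCW := cC (C `&` W).
have e : C `&` W = C.
  apply: hCW.
  - exists (qmap A mu); split => //; apply/(Pinv mu); exact: Orb_refl.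
  - by exists W => //; rewrite setIC.
  - by exists W => //; rewrite setIC.
have : (C `&` W) (qmap A nu) by rewrite e.
by move=> [_ /(Pinv nu)].
Qed.
End Forward.

Section Chain.
Variables (E : graph) (A : ssga E).
Local Notation G := (grp A).
Local Notation dm := (@dom _ A).
Local Notation cd := (@cod _ A).
Local Notation ac := (@act _ A).
Implicit Types (v : vert E) (e : edge E) (p u w : seq (edge E)) (mu nu z : linf E)
  (g h : grp A).

Variables (F0 : set G) (x : linf E) (K : nat).

Definition close w1 w2 := [/\ Orb A x K w1, Orb A x K w2 &
  exists2 s, F0 s & (vpath (dm s) w1 /\ ac s w1 = w2) \/ (vpath (dm s) w2 /\ ac s w2 = w1)].

Inductive chain : seq (edge E) -> seq (edge E) -> Prop :=
| ch_refl w : chain w w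
| ch_step w1 w2 w3 : close w1 w2 -> chain w2 w3 -> chain w1 w3.

Lemma close_sym w1 w2 : close w1 w2 -> close w2 w1.
Proof. by move=> [h1 h2 [s hs hh]]; split => //; exists s => //; case: hh; [right|left]. Qed.

Lemma chain_trans w1 w2 w3 : chain w1 w2 -> chain w2 w3 -> chain w1 w3.
Proof.
elim=> // a b c hab _ IH hc; apply: ch_step hab _; exact: IH.
Qed.

Lemma chain_sym w1 w2 : chain w1 w2 -> chain w2 w1.
Proof.
elim=> [w|a b c hab _ IH]; first exact: ch_refl.
apply: chain_trans IH _; apply: ch_step (close_sym hab) (ch_refl _).
Qed.

Lemma Orb_nonnil w : Orb A x K w -> exists e w', w = e :: w'.
Proof.
move=> /Orb_vpath [g [_ sw]]; case: w sw => // e w' _; by exists e, w'.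
Qed.

Lemma gen_chain g : generated F0 g -> forall w, Orb A x K w -> vpath (dm g) w ->
  chain w (ac g w).
Proof.
elim=> {g} [g F0g|v|g _ IH|g h hgh _ IHg _ IHh] w ow vw.
- apply: ch_step (ch_refl _); split => //; first exact: Orb_act.
  by exists g => //; left.
- rewrite gunit_dom in vw; rewrite act_unit //; exact: ch_refl.
- have vw' : vpath (dm g) (ac (ginv g) w) by rewrite -ginv_cod; apply: act_vpath.
  have := IH _ (Orb_act ow vw) vw'.
  rewrite act_invV; last by rewrite -ginv_dom.
  exact: chain_sym.
- rewrite gmul_dom // in vw.
  rewrite act_mul //.
  apply: chain_trans (IHh _ ow vw) _.
  apply: IHg; first exact: Orb_act.
  by rewrite hgh; apply: act_vpath.
Qed.

Lemma chain_switch (T : seq (edge E) -> Prop) w1 w2 : chain w1 w2 -> ~ (T w1 <-> T w2) ->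
  exists w3 w4, close w3 w4 /\ ~ (T w3 <-> T w4).
Proof.
elim=> [w|a b c hab _ IH] hn; first by exfalso; apply: hn.
case: (pselect (T a <-> T b)) => hTab; last by exists a, b.
apply: IH => hbc; apply: hn; split => h.
  by apply/hbc/hTab.
by apply/hTab/hbc.
Qed.

End Chain.

Lemma seg_drop (E : graph) (p : linf E) m n : (m <= n)%N -> seg p m = drop (n - m) (seg p n).
Proof.
move=> mn; have [u [hu su]] := seg_split p m (n - m).
by rewrite subnK in hu => //; rewrite hu -su drop_size_cat.
Qed.

Section Back.
Variables (E : graph) (A : ssga E).
Local Notation G := (grp A).
Local Notation dm := (@dom _ A).
Local Notation cd := (@cod _ A).
Local Notation ac := (@act _ A).
Implicit Types (v : vert E) (e : edge E) (p u w : seq (edge E)) (mu nu z : linf E)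
  (g h : grp A).

Variables (F0 F : set G) (N0 : nat).
Hypotheses (fF : finite_set F) (hgen : forall g, generated F0 g)
  (hN0 : forall s, F0 s -> forall p, vpath (dm s) p -> (N0 <= size p)%N -> F (resp s p)).
Variables (x : linf E) (O' Cl' : set (linf E)).
Hypotheses (oO : open O') (cCl : closed Cl')
  (hsat : forall z z', sim_ae A z z' -> O' z -> O' z').
Definition XX z := forall n, Orb A x n (seg z n.+1).
Hypothesis hOC : forall z, XX z -> (O' z <-> Cl' z).

Lemma cluster2 (pp : nat -> linf E * linf E) : exists z z' : linf E,
  forall j k0, exists k, (k0 <= k)%N /\ forall t, (t < j)%N ->
    lval (pp k).1 t = lval z t /\ lval (pp k).2 t = lval z' t.
Proof.
have [c hc] := konig (fun k t => (lval (pp k).1 t, lval (pp k).2 t)).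
have ok1 : linf_ok ((fun t => (c t).1) : edge_space E).
  move=> t /=; have [k [_ hk]] := hc t.+2 0%N.
  have := hk t.+1 (ltnSn _); have := hk t (leqW (ltnSn _)).
  by case: (c t) => a1 a2; case: (c t.+1) => b1 b2 [<- _] [<- _]; rewrite lvalP.
have ok2 : linf_ok ((fun t => (c t).2) : edge_space E).
  move=> t /=; have [k [_ hk]] := hc t.+2 0%N.
  have := hk t.+1 (ltnSn _); have := hk t (leqW (ltnSn _)).
  by case: (c t) => a1 a2; case: (c t.+1) => b1 b2 [_ <-] [_ <-]; rewrite lvalP.
exists (exist (fun f : edge_space E => f \in linf_ok (E:=E)) _ (mem_set ok1) : linf E).
exists (exist (fun f : edge_space E => f \in linf_ok (E:=E)) _ (mem_set ok2) : linf E) => j k0.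
have [k [hk ha]] := hc j k0; exists k; split => // t tj.
change (lval (pp k).1 t = (c t).1 /\ lval (pp k).2 t = (c t).2); by rewrite -(ha t tj).
Qed.

Lemma XX_closed (pp : nat -> linf E) z :
  (forall k, XX (pp k)) ->
  (forall j, exists k, forall t, (t < j)%N -> lval (pp k) t = lval z t) -> XX z.
Proof.
move=> hX hz n; have [k hk] := hz n.+1.
have e : seg (pp k) n.+1 = seg z n.+1 by apply/seg_eqP.
by rewrite -e; apply: hX.
Qed.

Lemma F1 : exists L, forall z (w : linf E), XX z -> O' z ->
  (forall t, (t < L)%N -> lval w t = lval z t) -> O' w.
Proof.
apply: contrapT => hn.
have hw : forall L, exists zw : linf E * linf E, [/\ XX zw.1, O' zw.1,
    (forall t, (t < L)%N -> lval zw.2 t = lval zw.1 t) & ~ O' zw.2].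
  move=> L; apply: contrapT => hL; apply: hn; exists L => z w0 Xz Oz hzw.
  apply: contrapT => nw; apply: hL; by exists (z, w0); split.
have [pp hpp] := choice hw.
have [z [z' hc]] := cluster2 pp.
have ezz : forall t, lval z' t = lval z t.
  move=> t; have [k [tk hk]] := hc t.+1 t.+1.
  have [h1 h2] := hk t (ltnSn _).
  by rewrite -h1 -h2; have [_ _ + _] := hpp k; apply; apply: leq_trans tk.
have Xz : XX z.
  apply: (XX_closed (pp := fun k => (pp k).1)); first by move=> k1; case: (hpp k1).
  by move=> j; have [k [_ hk]] := hc j 0%N; exists k => t tj; case: (hk t tj).
have Clz : Cl' z.
  apply: closed_cyl => // j; have [k [_ hk]] := hc j 0%N.
  exists (pp k).1; split; last by move=> t tj; case: (hk t tj).
  by have [h1 h2 _ _] := hpp k; apply/hOC.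
have Oz : O' z by apply/hOC.
have [j hj] := open_cyl oO Oz.
have [k [_ hk]] := hc j 0%N.
have [_ _ _ nO] := hpp k; apply: nO; apply: hj => t tj.
by have [_ h2] := hk t tj; rewrite h2 ezz.
Qed.


Section WithL.
Variable L : nat.
Hypothesis hL : forall z (w : linf E), XX z -> O' z ->
  (forall t, (t < L)%N -> lval w t = lval z t) -> O' w.

Definition Tw w := exists y : linf E, [/\ XX y, O' y & seg y L = drop (size w - L) w].

Definition Wit M := exists p p' : linf E, [/\ Orb A x M (seg p M.+1), Orb A x M (seg p' M.+1),
  (forall i, (i <= M)%N -> exists h, [/\ F h, dm h = rg (lval p i) & ac h (seg p i.+1) = seg p' i.+1])
  & ~ (Tw (seg p M.+1) <-> Tw (seg p' M.+1))].

Lemma Tw_drop w d : (d + L <= size w)%N -> Tw (drop d w) <-> Tw w.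
Proof.
move=> hd; rewrite /Tw; have -> : drop (size (drop d w) - L) (drop d w) = drop (size w - L) w.
  by rewrite drop_drop size_drop; congr drop; lia.
by [].
Qed.

Lemma Tw_seg z n : (L <= n)%N -> Tw (seg z n) <-> exists y : linf E, [/\ XX y, O' y & seg y L = seg z L].
Proof. by move=> hn; rewrite /Tw size_seg -seg_drop. Qed.

Lemma make_wit M w1 w2 s : let K := (M + N0 + #|vert E|.+1)%N in
  Orb A x K w1 -> Orb A x K w2 -> F0 s -> vpath (dm s) w1 -> ac s w1 = w2 ->
  ~ (Tw w1 <-> Tw w2) -> (L <= M.+1)%N -> Wit M.
Proof.
move=> K o1 o2 Fs vs hs hT hLM.
have [g1 [vg1 sw1]] := Orb_vpath o1.
have [g2 [vg2 sw2]] := Orb_vpath o2.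
have fp1 : fpath_ok w1 by case/andP: vg1.
have fp2 : fpath_ok w2 by case/andP: vg2.
have [p1 hp1] := @extend _ w1 M.+1 fp1 ltac:(rewrite sw1 /K; lia).
have [p2 hp2] := @extend _ w2 M.+1 fp2 ltac:(rewrite sw2 /K; lia).
rewrite sw1 in hp1; rewrite sw2 in hp2.
have hseg : forall (p : linf E) (ww : seq (edge E)), seg p M.+1 = drop (K.+1 - M.+1) ww -> forall i, (i <= M)%N ->
    seg p i.+1 = drop (K - i) ww.
  move=> p ww hp i iM; rewrite (@seg_drop _ p i.+1 M.+1) // hp drop_drop.
  by congr drop; rewrite /K; lia.
exists p1, p2; split.
- rewrite hp1; apply: (Orb_down (n := K) (u := take (K.+1 - M.+1) w1)); rewrite ?cat_take_drop //.
    by rewrite size_drop sw1; lia.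
  by rewrite /K; lia.
- rewrite hp2; apply: (Orb_down (n := K) (u := take (K.+1 - M.+1) w2)); rewrite ?cat_take_drop //.
    by rewrite size_drop sw2; lia.
  by rewrite /K; lia.
- move=> i iM; rewrite (hseg _ _ hp1 _ iM) (hseg _ _ hp2 _ iM).
  have vs' : vpath (dm s) (take (K - i) w1 ++ drop (K - i) w1) by rewrite cat_take_drop.
  have [h1 [h2 h3]] := act_suffix vs'.
  have st : size (take (K - i) w1) = (K - i)%N by rewrite size_takel // sw1; lia.
  exists (resp s (take (K - i) w1)); split.
  + apply: hN0 => //; last by rewrite st /K; lia.
    by move: vs'; rewrite vpath_cat => /andP[].
  + move: h3; rewrite -(hseg _ _ hp1 _ iM) segS vpath_cons => /andP[/eqP <- _] //.
  + by rewrite -h1 cat_take_drop st hs.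
- rewrite hp1 hp2 !Tw_drop ?sw1 ?sw2 //; rewrite /K; lia.
Qed.


Lemma all_wit a b : XX a -> XX b -> O' a -> ~ O' b -> forall M, (L <= M.+1)%N -> Wit M.
Proof.
move=> Xa Xb Oa nOb M hLM.
set K := (M + N0 + #|vert E|.+1)%N.
have hch : forall y, XX y -> chain F0 x K (seg x K.+1) (seg y K.+1).
  move=> y Xy; have [g [hg1 hg2]] := Xy K.
  rewrite -hg2; apply: gen_chain; first exact: hgen.
    exact: Orb_refl.
  by rewrite hg1; apply: vpath_seg.
have hKL : (L <= K.+1)%N by rewrite /K; lia.
have Ta : Tw (seg a K.+1) by apply/Tw_seg => //; exists a.
have nTb : ~ Tw (seg b K.+1).
  move/(Tw_seg _ hKL) => [y [Xy Oy ey]]; apply: nOb; apply: (hL Xy Oy).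
  by apply/seg_eqP.
have [w1 [w2 [[o1 o2 [s Fs hor]] hT]]] :
    exists w1 w2, close F0 x K w1 w2 /\ ~ (Tw w1 <-> Tw w2).
  case: (pselect (Tw (seg x K.+1))) => hx.
    apply: (chain_switch (hch b Xb)) => h; apply: nTb; exact/h.
  apply: (chain_switch (hch a Xa)) => h; apply: hx; exact/h.
case: hor => [[vs hs]|[vs hs]].
  exact: (make_wit o1 o2 Fs vs hs hT).
apply: (make_wit o2 o1 Fs vs hs) => // h; apply: hT; split => ?; by apply/h.
Qed.

Lemma no_sep a b : XX a -> XX b -> O' a -> O' b.
Proof.
move=> Xa Xb Oa; apply: contrapT => nOb.
have hW : forall k, exists pp : linf E * linf E,
    [/\ Orb A x (k + L) (seg pp.1 (k + L).+1), Orb A x (k + L) (seg pp.2 (k + L).+1),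
    (forall i, (i <= k + L)%N -> exists h, [/\ F h, dm h = rg (lval pp.1 i) &
       ac h (seg pp.1 i.+1) = seg pp.2 i.+1])
    & ~ (Tw (seg pp.1 (k + L).+1) <-> Tw (seg pp.2 (k + L).+1))].
  move=> k; have [p [p' hp]] := @all_wit a b Xa Xb Oa nOb (k + L) ltac:(lia).
  by exists (p, p').
have [pp hpp] := choice hW.
have [z [z' hc]] := cluster2 pp.
have hX : forall (f : linf E * linf E -> linf E), (f = fst \/ f = snd) -> forall y : linf E,
    (forall j, exists k, (j <= k)%N /\ forall t, (t < j)%N -> lval (f (pp k)) t = lval y t) ->
    XX y.
  move=> f hf y hy n; have [k [nk hk]] := hy n.+1.
  have e : seg (f (pp k)) n.+1 = seg y n.+1 by apply/seg_eqP.
  rewrite -e; have [o1 o2 _ _] := hpp k.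
  have o : Orb A x (k + L) (seg (f (pp k)) (k + L).+1) by case: hf => ->.
  apply: (Orb_down (n := k + L) (u := take ((k + L).+1 - n.+1) (seg (f (pp k)) (k + L).+1))).
  - by rewrite (@seg_drop _ (f (pp k)) n.+1 (k + L).+1) ?cat_take_drop //; lia.
  - by rewrite size_seg.
  - lia.
have Xz : XX z.
  apply: (hX fst (or_introl erefl)) => j; have [k [jk hk]] := hc j j.
  by exists k; split => // t tj; case: (hk t tj).
have Xz' : XX z'.
  apply: (hX snd (or_intror erefl)) => j; have [k [jk hk]] := hc j j.
  by exists k; split => // t tj; case: (hk t tj).
have ae : sim_ae A z z'.
  exists F; split => //.
  have hg : forall i, exists h, [/\ F h, dm h = rg (lval z i) & ac h (seg z i.+1) = seg z' i.+1].
    move=> i; have [k [ik hk]] := hc i.+1 i.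
    have [_ _ hR _] := hpp k.
    have [h [Fh dh ah]] := hR i ltac:(lia).
    have e1 : seg (pp k).1 i.+1 = seg z i.+1 by apply/seg_eqP => t ti; case: (hk t ti).
    have e2 : seg (pp k).2 i.+1 = seg z' i.+1 by apply/seg_eqP => t ti; case: (hk t ti).
    exists h; split => //; first by rewrite dh; case: (hk i (ltnSn _)) => ->.
    by rewrite -e1 -e2.
  have [gs hgs] := choice hg; exists gs => k; have [? ? ?] := hgs k; by split.
have [k [_ hk]] := hc L 0%N.
have [_ _ _ hT] := hpp k.
have e1 : seg (pp k).1 L = seg z L by apply/seg_eqP => t ti; case: (hk t ti).
have e2 : seg (pp k).2 L = seg z' L by apply/seg_eqP => t ti; case: (hk t ti).
have hLk : (L <= (k + L).+1)%N by lia.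
rewrite !(Tw_seg _ hLk) e1 e2 in hT.
apply: hT; split.
  move=> [y [Xy Oy ey]]; exists z'; split => //.
  apply: (hsat ae); apply: (hL Xy Oy); exact/seg_eqP.
move=> [y [Xy Oy ey]]; exists z; split => //.
apply: (hsat (sim_ae_sym ae)); apply: (hL Xy Oy); exact/seg_eqP.
Qed.

End WithL.

End Back.

Lemma foldr_max_ub (l : seq nat) i : i \in l -> (i <= foldr maxn 0 l)%N.
Proof.
elim: l => // a l IH; rewrite in_cons => /orP[/eqP ->|/IH h] /=.
  exact: leq_maxl.
exact: leq_trans h (leq_maxr _ _).
Qed.

Lemma uniform_bound (E : graph) (A : ssga E) (F0 F : set (grp A)) :
  finite_set F0 ->
  (forall g : grp A, exists n, forall k, (n <= k)%N ->
      forall p, vpath (@dom _ A g) p -> size p = k -> F (resp g p)) ->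
  exists N0, forall s, F0 s -> forall p, vpath (@dom _ A s) p -> (N0 <= size p)%N -> F (resp s p).
Proof.
move=> fF0 hc; have [nf hnf] := choice hc.
have : finite_set [set nf s | s in F0] by apply: finite_image.
move=> /finite_seqP [l hl].
exists (foldr maxn 0 l) => s F0s p vp hp.
apply: (hnf s (size p)) => //.
apply: leq_trans hp; apply: foldr_max_ub.
have : [set nf s0 | s0 in F0] (nf s) by exists s.
by rewrite hl.
Qed.

Theorem proposition6p1 (E : graph) (A : ssga E) :
  finitely_generated A -> contracting A ->
  forall mu nu : linf E,
    connected_component [set: limit_space A] (qmap A mu) (qmap A nu)
    <-> sim_e A mu nu.
Proof.
move=> [F0 [fF0 hgen]] [F [fF hc]] mu nu; split; first exact: forward.
move=> [gs hgs].
have [N0 hN0] := uniform_bound fF0 hc.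
pose S := [set qmap A z | z in XX A mu].
have Xmu : XX A mu mu by move=> n; apply: Orb_refl.
have Xnu : XX A mu nu by move=> n; exists (gs n); apply: hgs.
exists S; last by exists nu.
split => //; first by exists mu.
move=> B [b0 Bb0] [O oO BO] [Cl cCl BCl].
pose O' := qmap A @^-1` O.
pose Cl' := qmap A @^-1` Cl.
have oO' : open O' by exact: oO.
have cCl' : closed Cl'.
  have : open (~` Cl) by apply: closed_openC.
  move=> h; have h' : open (~` Cl') by exact: h.
  by rewrite -[Cl']setCK; apply: open_closedC.
have hsat : forall z z', sim_ae A z z' -> O' z -> O' z'.
  by move=> z z' hz; rewrite /O' /= (pi_eq hz).
have hOC : forall z, XX A mu z -> (O' z <-> Cl' z).
  move=> z Xz; have Sz : S (qmap A z) by exists z.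
  rewrite /O' /Cl' /=; split => h.
    have : B (qmap A z) by rewrite BO.
    by rewrite BCl => -[].
  have : B (qmap A z) by rewrite BCl.
  by rewrite BO => -[].
have [L hL] := F1 oO' cCl' hOC.
apply/seteqP; split; first by rewrite BO => ? [].
move=> c [b Xb <-].
have : (S `&` O) b0 by rewrite -BO.
move=> [[a Xa <-] Oa].
have Ob : O' b := no_sep fF hgen hN0 hsat hL Xa Xb Oa.
by rewrite BO; split => //; exists b.
Qed.
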